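(* For every nontrivial finite group $G$, $\beta(G)\ge\beta_{\mathrm g}(G)$. Moreover, there exist finite groups $G$ with $\beta(G)>\beta_{\mathrm g}(G)$.
   Context: For a nonempty subset $X$ of a group $G$, $Q(X):=\{xy^{-1}: x,y\in X\}$. Nonempty subsets $S_1,S_2,S_3$ of $G$ satisfy the Triple Product Property (TPP) if for all $s_i\in Q(S_i)$: $s_1s_2s_3=1$ iff $s_1=s_2=s_3=1$. A group $G$ realizes $\langle n,p,m\rangle$ if there are subsets $S_1,S_2,S_3\subseteq G$ with $|S_1|=n$, $|S_2|=p$, $|S_3|=m$ satisfying the TPP; it realizes it through subgroups if the $S_i$ can be chosen to be subgroups. For a nontrivial finite group $G$, the TPP capacity is $\beta(G):=\max\{npm : G \text{ realizes } \langle n,p,m\rangle\}$ and the TPP subgroup capacity is $\beta_{\mathrm g}(G):=\max\{npm : G \text{ realizes } \langle n,p,m\rangle \text{ through subgroups}\}$. *)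

(* Defs.v *)
From mathcomp Require Import all_boot all_fingroup.
Set Implicit Arguments. Unset Strict Implicit. Unset Printing Implicit Defensive.
Local Open Scope group_scope.

Definition Qset (gT : finGroupType) (X : {set gT}) : {set gT} :=
  [set x * y^-1 | x in X, y in X].

Definition TPP (gT : finGroupType) (G : {set gT}) (S1 S2 S3 : {set gT}) : bool :=
  [&& S1 != set0, S2 != set0, S3 != set0,
      S1 \subset G, S2 \subset G, S3 \subset G &
      [forall s1 in Qset S1, forall s2 in Qset S2, forall s3 in Qset S3,
         (s1 * s2 * s3 == 1) == [&& s1 == 1, s2 == 1 & s3 == 1]]].

Definition realizes (gT : finGroupType) (G : {set gT}) (n p m : nat) : Prop :=
  exists S1 S2 S3 : {set gT},
    [/\ TPP G S1 S2 S3, #|S1| = n, #|S2| = p & #|S3| = m].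

Definition realizes_sub (gT : finGroupType) (G : {set gT}) (n p m : nat) : Prop :=
  exists S1 S2 S3 : {group gT},
    [/\ TPP G S1 S2 S3, #|S1| = n, #|S2| = p & #|S3| = m].

Definition triple (gT : finGroupType) := ({set gT} * {set gT} * {set gT})%type.

Definition beta (gT : finGroupType) (G : {set gT}) : nat :=
  \max_(S : triple gT | TPP G S.1.1 S.1.2 S.2) (#|S.1.1| * #|S.1.2| * #|S.2|)%N.

Definition beta_g (gT : finGroupType) (G : {set gT}) : nat :=
  \max_(S : triple gT | [&& group_set S.1.1, group_set S.1.2, group_set S.2 &
                           TPP G S.1.1 S.1.2 S.2])
     (#|S.1.1| * #|S.1.2| * #|S.2|)%N.

(* Main.v *)
From HB Require Import structures.
Require Import Defs.
From mathcomp Require Import all_boot all_fingroup.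
From mathcomp Require Import all_algebra.
Set Implicit Arguments. Unset Strict Implicit. Unset Printing Implicit Defensive.

Inductive dic := Dic of ('I_6 * bool).
Definition dval (x : dic) := let: Dic p := x in p.
Lemma dvalK : cancel dval Dic. Proof. by case. Qed.
HB.instance Definition _ := Finite.copy dic (can_type dvalK).

Local Open Scope ring_scope.
Definition dmulp (x y : 'I_6 * bool) : 'I_6 * bool :=
  let: (i, j) := x in let: (k, l) := y in
  (i + (if j then - k else k) + (if j && l then 3%:R else 0), j (+) l).
Definition dmul x y := Dic (dmulp (dval x) (dval y)).
Definition done := Dic (0, false).
Definition dinv (x : dic) := let: (i,j) := dval x in
   if j then Dic (i + 3%:R, true) else Dic (-i, false).
Local Close Scope ring_scope.

Definition mk (k : nat) (b : bool) : dic := Dic (inZp k, b).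
Definition elts := [seq mk k b | k <- iota 0 6, b <- [:: false; true]].
Lemma eltsP x : x \in elts.
Proof. by case: x => [[[[|[|[|[|[|[|k]]]]]] Hk] [|]]]. Qed.

Lemma all_elts (P : pred dic) : all P elts -> forall x, P x.
Proof. by move=> /allP H x; apply: H; apply: eltsP. Qed.

Lemma dmulA : associative dmul.
Proof.
have H : all (fun x => all (fun y => all (fun z => dmul (dmul x y) z == dmul x (dmul y z)) elts) elts) elts by vm_compute.
move=> x y z.
by move/allP: H => /(_ x (eltsP x)) /allP /(_ y (eltsP y)) /allP /(_ z (eltsP z)) /eqP.
Qed.
Lemma dmul1 : left_id done dmul.
Proof.
have H : all (fun x => dmul done x == x) elts by vm_compute.
by move=> x; apply/eqP; move/allP: H; apply; apply: eltsP.
Qed.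
Lemma dmulV : left_inverse done dinv dmul.
Proof.
have H : all (fun x => dmul (dinv x) x == done) elts by vm_compute.
by move=> x; apply/eqP; move/allP: H; apply; apply: eltsP.
Qed.
HB.instance Definition _ := Finite_isGroup.Build dic dmulA dmul1 dmulV.

Local Open Scope group_scope.
Lemma cardD : #|[set: dic]| = 12%N.
Proof.
have U : uniq elts by vm_compute.
rewrite -[12%N]/(size elts) -(card_uniqP U); apply: eq_card => x.
by rewrite in_setT eltsP.
Qed.

Section Gen.
Variable gT : finGroupType.

Lemma Qset_grp (A : {group gT}) x : x \in A -> x \in Qset A.
Proof.
move=> Hx; apply/imset2P; apply: (Imset2spec Hx (group1 A)).
by rewrite invg1 mulg1.
Qed.

Lemma TPP_eq (G : {set gT}) (S1 S2 S3 : {set gT}) s1 s2 s3 :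
  TPP G S1 S2 S3 -> s1 \in Qset S1 -> s2 \in Qset S2 -> s3 \in Qset S3 ->
  s1 * s2 * s3 = 1 -> [/\ s1 = 1, s2 = 1 & s3 = 1].
Proof.
case/and5P=> _ _ _ _ /and3P [_ _ /forall_inP H] H1 H2 H3 E.
move: (H s1 H1) => /forall_inP /(_ s2 H2) /forall_inP /(_ s3 H3).
rewrite E eqxx => /eqP /esym /and3P [/eqP -> /eqP -> /eqP ->]. by [].
Qed.

Lemma TPP_TI (G : {set gT}) (A B C : {group gT}) : TPP G A B C ->
  [/\ A :&: B = 1, B :&: C = 1 & A :&: C = 1].
Proof.
move=> T; split; apply/trivgP/subsetP => x; rewrite !inE => /andP [Ha Hb].
- have [] := TPP_eq T (Qset_grp Ha) (Qset_grp (groupVr Hb)) (Qset_grp (group1 C)).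
    by rewrite mulgV mulg1.
  by move=> -> _ _.
- have [] := TPP_eq T (Qset_grp (group1 A)) (Qset_grp Ha) (Qset_grp (groupVr Hb)).
    by rewrite mul1g mulgV.
  by move=> _ -> _.
- have [] := TPP_eq T (Qset_grp Ha) (Qset_grp (group1 B)) (Qset_grp (groupVr Hb)).
    by rewrite mulg1 mulgV.
  by move=> -> _ _.
Qed.

Lemma TI_in (A B : {set gT}) x : A :&: B = 1 -> x \in A -> x \in B -> x = 1.
Proof.
move=> TI Ha Hb; have: x \in A :&: B by rewrite inE Ha Hb.
by rewrite TI inE => /eqP.
Qed.
End Gen.

Definition zz := mk 3 false.
Definition tt2 := mk 2 false.

Lemma classify (H : {group dic}) : H = 1 :> {set dic} \/ zz \in H \/ tt2 \in H.
Proof.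
have P : all (fun x : dic => (x == 1) || [|| x^+2 == zz, x^+3 == zz, x == tt2 | x^+2 == tt2]) elts.
  by vm_compute.
case: (eqVneq (H : {set dic}) 1) => [->|/trivgPn [x Hx nx]]; first by left.
right; move/allP: P => /(_ x (eltsP x)); rewrite (negPf nx) /=.
case/or4P => /eqP <-.
- by left; rewrite groupX.
- by left; rewrite groupX.
- by right.
- by right; rewrite groupX.
Qed.

Lemma zz1 : zz != 1. Proof. by vm_compute. Qed.
Lemma tt21 : tt2 != 1. Proof. by vm_compute. Qed.

Lemma TIbound (A B : {group dic}) : A :&: B = 1 -> (#|A| * #|B| <= 12)%N.
Proof.
move=> TI; rewrite -TI_cardMg // -cardD; apply: subset_leq_card; apply: subsetT.
Qed.

Lemma betag_le : (beta_g [set: dic] <= 12)%N.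
Proof.
apply/bigmax_leqP => [[[A B] C]] /= /and4P [gA gB gC T].
have [TAB TBC TAC] := TPP_TI (A := Group gA) (B := Group gB) (C := Group gC) T.
have bAB := TIbound TAB; have bBC := TIbound TBC; have bAC := TIbound TAC.
rewrite /= in TAB TBC TAC bAB bBC bAC.
have z1 := zz1; have t1 := tt21.
have [hA|[hA|hA]] := classify (Group gA); have [hB|[hB|hB]] := classify (Group gB);
  have [hC|[hC|hC]] := classify (Group gC); rewrite /= in hA hB hC;
  rewrite ?hA ?hB ?hC ?cards1 ?mul1n ?muln1 //;
  try by rewrite -?hA -?hB -?hC // mulnC.
all: try (by move: z1; rewrite (TI_in TAB hA hB) ?eqxx);
     try (by move: z1; rewrite (TI_in TBC hB hC) ?eqxx);
     try (by move: z1; rewrite (TI_in TAC hA hC) ?eqxx);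
     try (by move: t1; rewrite (TI_in TAB hA hB) ?eqxx);
     try (by move: t1; rewrite (TI_in TBC hB hC) ?eqxx);
     try (by move: t1; rewrite (TI_in TAC hA hC) ?eqxx).
all: by rewrite -cardD; apply: subset_leq_card; apply: subsetT.
Qed.

Definition s1 := [:: mk 0 false; mk 0 true; mk 3 false; mk 3 true].
Definition s2 := [:: mk 0 false; mk 1 true].
Definition s3 := [:: mk 0 false; mk 2 true].

Lemma seq_card (s : seq dic) : uniq s -> #|[set x in s]| = size s.
Proof. move=> U; rewrite cardsE; exact/card_uniqP. Qed.

Lemma TPP_ex : TPP [set: dic] [set x in s1] [set x in s2] [set x in s3].
Proof.
have ne : forall s : seq dic, mk 0 false \in s -> [set x in s] != set0.
  by move=> s Hs; apply/set0Pn; exists (mk 0 false); rewrite inE.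
rewrite /TPP !ne // !subsetT /=.
have C : all (fun x1 => all (fun y1 => all (fun x2 => all (fun y2 =>
   all (fun x3 => all (fun y3 =>
    let q1 := x1 * y1^-1 in let q2 := x2 * y2^-1 in let q3 := x3 * y3^-1 in
    (q1 * q2 * q3 == 1) == [&& q1 == 1, q2 == 1 & q3 == 1]) s3) s3) s2) s2) s1) s1.
  by vm_compute.
apply/forall_inP => q1 /imset2P [x1 y1]; rewrite !in_set => H1 H1' ->.
apply/forall_inP => q2 /imset2P [x2 y2]; rewrite !in_set => H2 H2' ->.
apply/forall_inP => q3 /imset2P [x3 y3]; rewrite !in_set => H3 H3' ->.
move/allP: C => /(_ x1 H1) /allP /(_ y1 H1') /allP /(_ x2 H2) /allP /(_ y2 H2')
  /allP /(_ x3 H3) /allP /(_ y3 H3').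
by [].
Qed.

Lemma beta_ge : (16 <= beta [set: dic])%N.
Proof.
have := @leq_bigmax_cond _ (fun S : triple dic => TPP [set: dic] S.1.1 S.1.2 S.2)
  (fun S => #|S.1.1| * #|S.1.2| * #|S.2|)%N ([set x in s1], [set x in s2], [set x in s3]) TPP_ex.
by rewrite /= !seq_card.
Qed.

Theorem mainTheorem6 :
  (forall (gT : finGroupType) (G : {group gT}), G :!=: 1%g -> beta_g G <= beta G)%N /\
  (exists (gT : finGroupType) (G : {group gT}), G :!=: 1%g /\ (beta_g G < beta G)%N).
Proof.
split.
  move=> gT G _; apply/bigmax_leqP => S /and4P [_ _ _ T].
  exact: (@leq_bigmax_cond _ (fun S : triple gT => TPP G S.1.1 S.1.2 S.2)
     (fun S => #|S.1.1| * #|S.1.2| * #|S.2|)%N S T).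
exists dic, [set: dic]%G; split.
  apply/eqP => h; have := in_setT zz; rewrite h inE; apply/negP; exact: zz1.
apply: (leq_ltn_trans betag_le); exact: leq_trans _ beta_ge.
Qed.
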